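(* Let $c$ and $z$ be complex numbers and let $n$ be a positive integer. Then \[ \sum_{\pi \in \mathcal{D}(n)} (-1)^{\#(\pi)-1} \sum_{j=1}^{s(\pi)} \bigl(\ell(\pi) - s(\pi) + j\bigr)^z\, c^{\ell(\pi) - s(\pi) + j} = \sigma_{z,c}(n), \] where $\sigma_{z,c}(n) = \sum_{d \mid n} d^z c^d$.
   Context: For a positive integer $n$, $\mathcal{D}(n)$ denotes the set of all partitions of $n$ into distinct parts. For a partition $\pi$: $s(\pi)$ is its smallest part, $\ell(\pi)$ its largest part, and $\#(\pi)$ its number of parts. For a positive integer $m$ and complex $z$, $m^z = e^{z\log m}$ with the real logarithm. The sum $\sum_{d\mid n}$ runs over the positive divisors $d$ of $n$. *)

(* Defs.v *)
From Stdlib Require Import Reals.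
From mathcomp Require Import all_boot all_order all_algebra.
From mathcomp Require Import Rstruct.
From mathcomp Require Import complex.
Set Implicit Arguments. Unset Strict Implicit. Unset Printing Implicit Defensive.
Import Order.TTheory GRing.Theory Num.Theory.

(* m^z = e^{z log m} for a positive integer m and complex z, with the real
   logarithm, written out: e^{(a+ib) t} = e^{a t} (cos (b t) + i sin (b t)),
   t = ln m. *)
Definition natcpow (m : nat) (z : R[i]) : R[i] :=
  let t := ln (INR m) in
  Complex (exp (complex.Re z * t) * cos (complex.Im z * t))%R (exp (complex.Re z * t) * sin (complex.Im z * t))%R.

(* A partition of n into distinct parts is encoded as the set of its parts:
   a subset of {1,..,n} (as a subset of 'I_n.+1 avoiding 0) whose elements
   sum to n. *)
Definition is_distinct_partition (n : nat) (A : {set 'I_n.+1}) : bool :=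
  (ord0 \notin A) && (\sum_(i in A) (i : nat) == n)%N.

(* smallest part s(pi) (all parts are <= n, so n is a neutral upper bound) *)
Definition spart (n : nat) (A : {set 'I_n.+1}) : nat := \big[minn/n]_(i in A) (i : nat).
Definition lpart (n : nat) (A : {set 'I_n.+1}) : nat := \max_(i in A) (i : nat).
Definition nparts (n : nat) (A : {set 'I_n.+1}) : nat := #|A|.

Definition sigma_zc (z c : R[i]) (n : nat) : R[i] :=
  (\sum_(d <- divisors n) natcpow d z * c ^+ d)%R.

(* Main.v *)
Require Import Defs.
From Stdlib Require Import Reals.
From mathcomp Require Import all_boot all_order all_algebra.
From mathcomp Require Import Rstruct.
From mathcomp Require Import complex.
From mathcomp Require Import zify ring.
Set Implicit Arguments. Unset Strict Implicit. Unset Printing Implicit Defensive.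
Import Order.TTheory GRing.Theory Num.Theory.
Local Open Scope ring_scope.

Section Core.
Variable R : comNzRingType.
Variable K : nat.
Local Notation T := ('I_K).

Definition chi (I : {set T}) : {poly R} := \prod_(i in I) (1 - 'X^i).

Lemma chi_expand I : chi I =
  \sum_(J : {set T} | J \subset I) (-1) ^+ #|J| *: 'X^(\sum_(i in J) (i : nat)).
Proof.
rewrite /chi big_mkcond /=.
rewrite (eq_bigr (fun i => (if i \in I then - 'X^i else 0) + 1)); last first.
  by move=> i _; case: ifP => _; rewrite ?addr0 ?add0r // addrC.
rewrite bigA_distr /= [RHS]big_mkcond /=; apply: eq_bigr => J _.
case: ifP => sJI.
  rewrite -(big_mkcond (fun i => i \in J)) /=.
  under eq_bigr => i iJ do rewrite ((subsetP sJI) i iJ).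
  rewrite prodrN -expr_sum -mul_polyC rmorphXn /= rmorphN rmorph1.
  done.
have [i iJ iI] : exists2 i, i \in J & i \notin I.
  by by apply/subsetPn; rewrite sJI.
by rewrite (bigD1 i) //= iJ (negbTE iI) mul0r.
Qed.

Lemma coef_chi I N : (chi I)`_N =
  \sum_(J : {set T} | (J \subset I) && (\sum_(i in J) (i : nat) == N)%N) (-1) ^+ #|J|.
Proof.
rewrite chi_expand coef_sum big_mkcondr /=; apply: eq_bigr => J _.
by rewrite coefZ coefXn eq_sym; case: eqP; rewrite ?mulr1 ?mulr0.
Qed.

Variable m : nat.
Hypothesis m_gt0 : (0 < m)%N.

Definition Ia a := [set i : T | (a < i)%N && (i <= a + m)%N].
Definition Ja a := [set i : T | (a < i)%N && (i < a + m)%N].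

Lemma chi_split1 a : (a + m < K)%N -> chi (Ia a) = (1 - 'X^(a+m)) * chi (Ja a).
Proof.
move=> lt; rewrite /chi (bigD1 (Ordinal lt)) /=; last by rewrite inE /=; apply/andP; lia.
congr (_ * _); apply: eq_bigl => i; rewrite !inE -val_eqE /=.
apply/idP/idP; lia.
Qed.

Lemma chi_split2 a : (a + m < K)%N -> chi (Ia a) = (1 - 'X^(a.+1)) * chi (Ja a.+1).
Proof.
move=> lt; have lt2 : (a.+1 < K)%N by lia.
rewrite /chi (bigD1 (Ordinal lt2)) /=; last by rewrite inE /=; apply/andP; lia.
congr (_ * _); apply: eq_bigl => i; rewrite !inE -val_eqE /=.
apply/idP/idP; lia.
Qed.

Definition Gp k := \sum_(a < k) 'X^(a+m) * chi (Ja a).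

Lemma Gp_tele k : (k + m <= K)%N ->
  (1 - 'X^m) * Gp k = 'X^m * ((1 - 'X^k) * chi (Ja k)).
Proof.
elim: k => [|k IH] lt.
  by rewrite /Gp big_ord0 expr0 subrr mulr0 mul0r mulr0.
rewrite /Gp big_ord_recr /= mulrDr -/(Gp k) IH; last lia.
rewrite -chi_split2; last lia.
rewrite chi_split1; last lia.
rewrite exprD; ring.
Qed.
End Core.

Section Sets.
Variable R : comNzRingType.
Variable n : nat.
Local Notation T := ('I_n.+1).

Lemma lpart_ub (A : {set T}) (i : T) : i \in A -> (i <= lpart A)%N.
Proof. by move=> iA; rewrite /lpart (bigD1 i) //= leq_maxl. Qed.

Lemma lpart_in (A : {set T}) : A != set0 -> exists2 i : T, i \in A & (i : nat) = lpart A.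
Proof.
move=> nz; have : (0 < #|A|)%N by rewrite card_gt0.
move=> H; have [i iA E] := eq_bigmax_cond (fun i : T => (i:nat)) H.
by exists i => //; rewrite /lpart E.
Qed.

Lemma spart_lb (A : {set T}) (i : T) : i \in A -> (spart A <= i)%N.
Proof.
move=> iA; have : i \in [seq j <- index_enum T | j \in A] by rewrite mem_filter iA mem_index_enum.
rewrite /spart -big_filter; elim: [seq j <- _ | _] => // j s IH.
rewrite big_cons inE => /orP [/eqP ->|/IH H]; first exact: geq_minl.
exact: leq_trans (geq_minr _ _) H.
Qed.

Lemma spart_in (A : {set T}) : A != set0 -> exists2 i : T, i \in A & (i : nat) = spart A.
Proof.
move=> nz.
have : (spart A == n) || [exists i in A, (i : nat) == spart A].
  rewrite /spart; apply: (big_ind (fun x => (x == n) || [exists i in A, (i : nat) == x])).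
  - by rewrite eqxx.
  - by move=> x y /= Hx Hy; rewrite /minn; case: ifP.
  - by move=> i iA; apply/orP; right; apply/exists_inP; exists i.
case/orP => [/eqP E|/exists_inP [i iA /eqP E]]; last by exists i.
case/set0Pn: nz => i iA; exists i => //.
have := spart_lb iA; have := ltn_ord i; lia.
Qed.

Lemma sum_eq1 k x : \sum_(a < k) ((a : nat) == x)%:R = (x < k)%:R :> R.
Proof.
elim: k => [|k IH]; first by rewrite big_ord0.
rewrite big_ord_recr /= IH ltnS; by case: (ltngtP x k) => [h|h|h]; rewrite ?addr0 ?add0r.
Qed.
End Sets.

Section Sets2.
Variable R : comNzRingType.
Variable n m : nat.
Hypothesis m_gt0 : (0 < m)%N.
Local Notation T := ('I_n.+1).
Local Notation Ia := (Ia n.+1 m).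
Local Notation Ja := (Ja n.+1 m).

Lemma subIa (A : {set T}) a : A != set0 ->
  (A \subset Ia a) = (a < spart A)%N && (lpart A <= a + m)%N.
Proof.
move=> nz; have [i iA Ei] := spart_in nz; have [j jA Ej] := lpart_in nz.
apply/subsetP/andP => [H|[h1 h2] k kA].
  by have := H i iA; have := H j jA; rewrite !inE; lia.
by rewrite inE; have := spart_lb kA; have := lpart_ub kA; lia.
Qed.

Lemma subJa (A : {set T}) a : A != set0 ->
  (A \subset Ja a) = (a < spart A)%N && (lpart A < a + m)%N.
Proof.
move=> nz; have [i iA Ei] := spart_in nz; have [j jA Ej] := lpart_in nz.
apply/subsetP/andP => [H|[h1 h2] k kA].
  by have := H i iA; have := H j jA; rewrite !inE; lia.
by rewrite inE; have := spart_lb kA; have := lpart_ub kA; lia.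
Qed.

Lemma boolR (b2 b3 : bool) : ~~ (b2 && b3) -> (b2 || b3)%:R - b2%:R = b3%:R :> R.
Proof. by case: b2; case: b3; rewrite ?subrr ?subr0. Qed.

Lemma pointwise (A : {set T}) :
  ((lpart A - spart A < m)%N && (m <= lpart A)%N)%:R =
  \sum_(a < n.+1 - m) ((A \subset Ia a)%:R - (A \subset Ja a)%:R) :> R.
Proof.
have [->|nz] := eqVneq A set0.
  rewrite /lpart big_set0 /=; have -> : (m <= 0)%N = false by lia.
  rewrite andbF.
  by rewrite big1 // => a _; rewrite !sub0set subrr.
have [i iA Ei] := spart_in nz; have [j jA Ej] := lpart_in nz.
have sl : (spart A <= lpart A)%N by have := lpart_ub iA; lia.
have ln : (lpart A <= n)%N by have := ltn_ord j; lia.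
rewrite (eq_bigr (fun a : 'I_(n.+1 - m) => ((a : nat) == (lpart A - m)%N)%:R *
   ((lpart A - spart A < m)%N && (m <= lpart A)%N)%:R)); last first.
  move=> a _; rewrite subIa // subJa //.
  have E : ((a < spart A) && (lpart A <= a + m))%N =
    ((a < spart A) && (lpart A < a + m))%N ||
    (((a : nat) == lpart A - m) && ((lpart A - spart A < m) && (m <= lpart A)))%N by lia.
  rewrite E boolR; last by lia.
  by rewrite -natrM mulnb.
rewrite -mulr_suml sum_eq1.
case: (boolP ((lpart A - spart A < m) && (m <= lpart A))%N) => h; last by rewrite mulr0.
by rewrite mulr1; have -> : (lpart A - m < n.+1 - m)%N by lia.
Qed.

Lemma sum_sub (I : {set T}) N : ord0 \notin I ->
  \sum_(A : {set T} | (ord0 \notin A) && (\sum_(i in A) (i:nat) == N)%N)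
     (-1)^+#|A| * (A \subset I)%:R = (chi R I)`_N.
Proof.
move=> I0; rewrite coef_chi big_mkcond [RHS]big_mkcond; apply: eq_bigr => A _.
case sub: (A \subset I); last by rewrite /= mulr0; case: ifP.
have A0 : ord0 \notin A by apply: contra I0; apply: (subsetP sub).
by rewrite A0 /= mulr1.
Qed.

Lemma Ia0 a : ord0 \notin Ia a. Proof. by rewrite inE. Qed.
Lemma Ja0 a : ord0 \notin Ja a. Proof. by rewrite inE. Qed.

Definition Sm N := \sum_(A : {set T} | (ord0 \notin A) && (\sum_(i in A) (i:nat) == N)%N)
     (-1)^+(#|A|).-1 * ((lpart A - spart A < m)%N && (m <= lpart A)%N)%:R :> R.

Lemma Sm_coef N : Sm N = (Gp R n.+1 m (n.+1 - m))`_N.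
Proof.
rewrite /Sm (eq_bigr (fun A : {set T} => - ((-1)^+#|A| *
   \sum_(a < n.+1 - m) ((A \subset Ia a)%:R - (A \subset Ja a)%:R)))); last first.
  move=> A _; rewrite pointwise.
  have [->|nz] := eqVneq A set0.
    by rewrite big1 ?mulr0 ?oppr0 // => a _; rewrite !sub0set subrr.
  have : (0 < #|A|)%N by rewrite card_gt0.
  by case: #|A| => // k _; rewrite exprS mulN1r mulNr opprK.
rewrite sumrN; under eq_bigr => A _ do rewrite mulr_sumr.
rewrite exchange_big /= /Gp coef_sum -sumrN; apply: eq_bigr => a _.
under eq_bigr => A _ do rewrite mulrBr.
rewrite sumrB !sum_sub ?Ia0 ?Ja0 // chi_split1 //; last by have := ltn_ord a; lia.
by rewrite mulrBl mul1r coefB addrAC subrr add0r opprK.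
Qed.

Lemma chiJ_low k j : (j <= k)%N -> (chi R (Ja k))`_j = (j == 0)%N%:R.
Proof.
move=> jk; rewrite coef_chi.
rewrite (eq_bigl (fun J : {set T} => (J == set0) && (j == 0)%N)); last first.
  move=> J; case: (eqVneq J set0) => [->|nz].
    by rewrite sub0set big_set0 eq_sym.
  case/set0Pn: nz => i iJ; apply/negbTE/negP => /andP[sub /eqP E].
  have := (subsetP sub) i iJ; rewrite inE.
  have : (i <= \sum_(i in J) (i : nat))%N by rewrite (bigD1 i) //= leq_addr.
  lia.
case: (j =P 0%N) => [E|/eqP nz]; last first.
  rewrite big_pred0 => [|J]; last by rewrite andbF.
  by [].
rewrite (big_pred1 set0) => [|J]; last by rewrite andbT.
by rewrite cards0.
Qed.


Hypothesis m_le : (m <= n)%N.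

Lemma Grec N : (N <= n)%N -> (Gp R n.+1 m (n.+1 - m))`_N =
  if (N < m)%N then 0 else (Gp R n.+1 m (n.+1 - m))`_(N - m) + (N - m == 0)%N%:R.
Proof.
move=> HN; set G := Gp R n.+1 m (n.+1 - m).
have E : (1 - 'X^m) * G = 'X^m * ((1 - 'X^(n.+1 - m)) * chi R (Ja (n.+1 - m))).
  by apply: Gp_tele => //; lia.
have {E} := congr1 (fun p : {poly R} => p`_N) E.
rewrite mulrBl mul1r coefB !coefXnM mulrBl mul1r coefB coefXnM -/G.
case: ltnP => h; first by rewrite subr0.
rewrite chiJ_low; last by lia.
have -> : (N - m < n.+1 - m)%N by lia.
by rewrite subr0 => /eqP; rewrite subr_eq => /eqP ->; rewrite addrC.
Qed.

Lemma G_val N : (N <= n)%N -> (Gp R n.+1 m (n.+1 - m))`_N = ((m %| N) && (0 < N))%N%:R.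
Proof.
elim/ltn_ind: N => N IH HN; rewrite Grec //.
case: ltnP => h.
  case: (posnP N) => [->|N0]; first by rewrite andbF.
  by have -> : (m %| N)%N = false by apply/negbTE/negP => /(dvdn_leq N0); lia.
rewrite IH; [|lia|lia].
case: (eqVneq N m) => [->|ne].
  by rewrite subnn andbF dvdnn m_gt0 add0r.
have -> : (N - m == 0)%N = false by lia.
rewrite addr0 dvdn_subl // ?dvdnn //.
have -> : (0 < N - m)%N by lia.
have -> : (0 < N)%N by lia.
done.
Qed.

Lemma Sm_val N : (N <= n)%N -> Sm N = ((m %| N) && (0 < N))%N%:R.
Proof. by move=> HN; rewrite Sm_coef G_val. Qed.

End Sets2.

Section Final.
Variable R : comNzRingType.

Lemma range_sum a b N (F : nat -> R) : (a <= b <= N)%N ->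
  \sum_(a <= m < b) F m = \sum_(m < N) ((a <= m) && (m < b))%N%:R * F m.
Proof.
case/andP => ab bN.
rewrite -(big_mkord xpredT (fun m => ((a <= m) && (m < b))%N%:R * F m)).
rewrite (big_cat_nat (m:=0) (n:=a) (p:=N)) //=; last by apply: leq_trans bN.
rewrite (big_cat_nat (m:=a) (n:=b) (p:=N)) //=.
rewrite [X in X + _]big1_seq; last first.
  move=> i; rewrite mem_index_iota /= => h.
  by rewrite leqNgt h /= mul0r.
rewrite [X in _ + (_ + X)]big1_seq; last first.
  move=> i; rewrite mem_index_iota /= => /andP[h _].
  by rewrite (ltnNge i b) h andbF mul0r.
rewrite add0r addr0; apply: eq_big_seq => i.
by rewrite mem_index_iota => ->; rewrite mul1r.
Qed.

Lemma divisors_sum n (g : nat -> R) : (0 < n)%N ->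
  \sum_(d <- divisors n) g d = \sum_(m < n.+1) (m %| n)%N%:R * g m.
Proof.
move=> n0.
rewrite (perm_big [seq d <- index_iota 0 n.+1 | (d %| n)%N]); last first.
  apply: uniq_perm; first exact: divisors_uniq.
    by apply: filter_uniq; apply: iota_uniq.
  move=> d; rewrite -dvdn_divisors // mem_filter mem_index_iota /=.
  case: (boolP (d %| n)%N) => //= h; by rewrite ltnS dvdn_leq.
rewrite big_filter big_mkcond big_mkord; apply: eq_bigr => i _.
by case: ifP; rewrite ?mul1r ?mul0r.
Qed.

End Final.

Theorem theorem2p1 (c z : R[i]) (n : nat) (hn : (0 < n)%N) :
  \sum_(A : {set 'I_n.+1} | is_distinct_partition A)
     (-1) ^+ (nparts A).-1 *
     \sum_(1 <= j < (spart A).+1)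
        natcpow (lpart A - spart A + j) z * c ^+ (lpart A - spart A + j)
  = sigma_zc z c n.
Proof.
set g := fun k : nat => natcpow k z * c ^+ k.
rewrite /sigma_zc -/g.
rewrite (divisors_sum g hn).
rewrite (eq_bigr (fun A : {set 'I_n.+1} => (-1) ^+ (nparts A).-1 *
   \sum_(m < n.+1) ((lpart A - spart A < m)%N && (m <= lpart A)%N)%:R * g m)); last first.
  move=> A /andP [A0 /eqP SA]; congr (_ * _).
  have nz : A != set0.
    by apply/eqP => E; move: SA; rewrite E big_set0; lia.
  have [i iA Ei] := spart_in nz; have [j jA Ej] := lpart_in nz.
  have sl : (spart A <= lpart A)%N by have := lpart_ub iA; lia.
  have ln : (lpart A <= n)%N by have := ltn_ord j; lia.
  symmetry.
  rewrite (eq_bigr (fun m : 'I_n.+1 => (((lpart A - spart A).+1 <= m) && (m < (lpart A).+1))%N%:R * g m));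
    last by move=> m _; rewrite ltnS.
  rewrite -(@range_sum _ _ _ n.+1 g); last by lia.
  have -> : (lpart A - spart A).+1 = (1 + (lpart A - spart A))%N by [].
  rewrite big_addn.
  have -> : ((lpart A).+1 - (lpart A - spart A) = (spart A).+1)%N by lia.
  by apply: eq_bigr => m _; rewrite addnC.
under eq_bigr => A _ do rewrite mulr_sumr.
rewrite exchange_big /=; apply: eq_bigr => m _.
under eq_bigr => A _ do rewrite mulrA.
rewrite -mulr_suml; congr (_ * _).
case: (posnP m) => [m0|m0].
  rewrite m0 dvd0n (gtn_eqF hn) big1 // => A _.
  by rewrite ltn0 /= mulr0.
have mle : (m <= n)%N by have := ltn_ord m; have := dvdn_leq hn; lia.
have H := Sm_val R[i] m0 mle (leqnn n).
rewrite hn andbT in H; rewrite -H /Sm.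
by apply: eq_bigr.
Qed.
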